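(* Let $q$ be a prime integer different from $p$. Then: (1) for every $0\le k\le r$, $S^k(q)=(q)=qR_k$; hence $\mathcal S^k(q)=[(q),(q),\dots,(q)]$; (2) for every $1\le\ell\le r$ and $0\le k\le\ell$, $L^{\ell-k}S^k(q)=J_{\ell,k}(q)\subseteq R_\ell$; (3) for every $1\le\ell\le r$ and $0\le k\le\ell-2$, $S\,L^{\ell-k-1}S^k(q)=L^{\ell-k}S^k(q)$. Here the iterated operators start from the ideal $(q)=q\mathbb{Z}\subseteq R_0$.
   Context: Fix a prime $p$ and an integer $r\ge0$. For $0\le k\le r$ let $R_k$ be the commutative ring which is free as a $\mathbb{Z}$-module with basis $X_{k,0},\dots,X_{k,k}$ and multiplication $X_{k,i}X_{k,j}=p^{k-\max(i,j)}X_{k,\min(i,j)}$; thus $X_{k,k}=1$, and an integer $n$ is identified with $nX_{k,k}$. For $0\le k\le\ell\le r$ define: the additive map $\mathrm{ind}^\ell_k:R_k\to R_\ell$, $X_{k,i}\mapsto X_{\ell,i}$; the ring homomorphism $\mathrm{res}^\ell_k:R_\ell\to R_k$, $\mathrm{res}^\ell_k(X_{\ell,i})=p^{\ell-k}X_{k,i}$ if $i\le k$ and $=p^{\ell-i}$ if $i\ge k$; and the multiplicative map $\mathrm{jnd}^\ell_k:R_k\to R_\ell$, $$\mathrm{jnd}^\ell_k\Big(\sum_{i=0}^k m_iX_{k,i}\Big)=m_kX_{\ell,\ell}+\sum_{k\le i<\ell}\frac{m_k^{p^{\ell-i}}-m_k^{p^{\ell-i-1}}}{p^{\ell-i}}X_{\ell,i}+\sum_{0\le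 i<k}\frac{(\sum_{s=i}^k m_sp^{k-s})^{p^{\ell-k}}-(\sum_{s=i+1}^k m_sp^{k-s})^{p^{\ell-k}}}{p^{\ell-i}}X_{\ell,i}$$ ($m_i\in\mathbb{Z}$). For $1\le k\le r$ and an ideal $I\subseteq R_{k-1}$: $L(I)=(\mathrm{res}^k_{k-1})^{-1}(I)\subseteq R_k$, and $S(I)$ is the ideal of $R_k$ generated by $\mathrm{ind}^k_{k-1}(I)\cup\mathrm{jnd}^k_{k-1}(I)$; $L^n,S^n$ denote iterates (each step raising the index by one). For an ideal $\mathscr I=[I_0,\dots,I_{k-1}]$ (sequence of ideals $I_j\subseteq R_j$), $\mathcal S\mathscr I=[I_0,\dots,I_{k-1},S(I_{k-1})]$; $(q)$ also denotes $[q\mathbb{Z}]$. For $0\le i\le\ell$, $F_{\ell,i}=X_{\ell,i}-p^{\ell-i}$; for $0\le k\le\ell$ and $x\in\mathbb{Z}$, $J_{\ell,k}(x)\subseteq R_\ell$ is the ideal generated by $x,F_{\ell,k},\dots,F_{\ell,\ell-1}$ if $k\le\ell-1$, and $J_{\ell,\ell}(x)=xR_\ell$. *)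

(* Defs.v *)
From HB Require Import structures.
From mathcomp Require Import all_boot all_order all_algebra.

Import Order.TTheory GRing.Theory Num.Theory.
Local Open Scope ring_scope.

(* Elements of R_k: coefficient vectors w.r.t. the basis X_{k,0},...,X_{k,k}. *)
Definition elt (k : nat) := {ffun 'I_k.+1 -> int}.

Section Rings.
Variable p : nat.

Definition X (k : nat) (i : 'I_k.+1) : elt k := [ffun m => (m == i)%:Z].

(* the integer n seen in R_k, i.e. n X_{k,k} *)
Definition cst (k : nat) (n : int) : elt k :=
  [ffun m : 'I_k.+1 => if (m : nat) == k then n else 0].

Definition eadd (k : nat) (x y : elt k) : elt k := [ffun m => x m + y m].
Definition escale (k : nat) (c : int) (x : elt k) : elt k := [ffun m => c * x m].
Definition ezero (k : nat) : elt k := [ffun m => 0].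

(* X_{k,i} X_{k,j} = p^(k - max i j) X_{k, min i j}, extended bilinearly *)
Definition emul (k : nat) (x y : elt k) : elt k :=
  [ffun m : 'I_k.+1 => \sum_(i < k.+1) \sum_(j < k.+1)
     if minn i j == m then x i * y j * (p ^ (k - maxn i j))%:Z else 0].

Definition resX (l k : nat) (i : 'I_l.+1) : elt k :=
  if (i <= k)%N then escale k (p ^ (l - k))%:Z (X k (inord i))
  else cst k (p ^ (l - i))%:Z.

Definition res (l k : nat) (x : elt l) : elt k :=
  [ffun m : 'I_k.+1 => \sum_(i < l.+1) x i * resX l k i m].

Definition ind (l k : nat) (x : elt k) : elt l :=
  [ffun m : 'I_l.+1 => if (m <= k)%N then x (inord m) else 0].

(* jnd^l_k, by the explicit formula (divisions are exact integer divisions) *)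
Definition jnd (l k : nat) (x : elt k) : elt l :=
  let mk := x ord_max in
  [ffun i : 'I_l.+1 =>
     if (i : nat) == l then mk
     else if (k <= i)%N then
       ((mk ^+ (p ^ (l - i)) - mk ^+ (p ^ (l - i - 1))) %/ (p ^ (l - i))%:Z)%Z
     else
       (((\sum_(s < k.+1 | (i <= s)%N) x s * (p ^ (k - s))%:Z) ^+ (p ^ (l - k))
         - (\sum_(s < k.+1 | (i < s)%N) x s * (p ^ (k - s))%:Z) ^+ (p ^ (l - k)))
        %/ (p ^ (l - i))%:Z)%Z].

Definition is_ideal (k : nat) (I : elt k -> Prop) : Prop :=
  [/\ I (ezero k),
      (forall x y, I x -> I y -> I (eadd k x y)) &
      (forall r x, I x -> I (emul k r x))].

Definition gen (k : nat) (A : elt k -> Prop) : elt k -> Prop :=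
  fun x => forall I, is_ideal k I -> (forall a, A a -> I a) -> I x.

Definition principal (k : nat) (a : elt k) : elt k -> Prop :=
  fun x => exists y, x = emul k a y.

Definition ideal_eq (k : nat) (I J : elt k -> Prop) : Prop := forall x, I x <-> J x.

Definition Lop (k : nat) (I : elt k -> Prop) : elt k.+1 -> Prop :=
  fun y => I (res k.+1 k y).
Definition Sop (k : nat) (I : elt k -> Prop) : elt k.+1 -> Prop :=
  gen k.+1 (fun y => exists x, I x /\ (y = ind k.+1 k x \/ y = jnd k.+1 k x)).

Fixpoint Siter (q : int) (k : nat) : elt k -> Prop :=
  match k with
  | 0 => principal 0 (cst 0 q)
  | k'.+1 => Sop k' (Siter q k')
  end.

Fixpoint Liter (k n : nat) (I : elt k -> Prop) : elt (n + k) -> Prop :=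
  match n return elt (n + k) -> Prop with
  | 0 => I
  | n'.+1 => Lop (n' + k) (Liter k n' I)
  end.

Definition F (l : nat) (i : 'I_l.+1) : elt l :=
  eadd l (X l i) (cst l (- (p ^ (l - i))%:Z)).

Definition J (l k : nat) (x : int) : elt l -> Prop :=
  if (k < l)%N then
    gen l (fun a => a = cst l x \/ exists i : 'I_l.+1, (k <= i < l)%N /\ a = F l i)
  else principal l (cst l x).

End Rings.

(* Main.v *)
Require Import Defs.
From HB Require Import structures.
From mathcomp Require Import all_boot all_order all_algebra.
From mathcomp Require Import finfield ring.
Import Order.TTheory GRing.Theory Num.Theory.
Local Open Scope ring_scope.

Definition phi (p k : nat) (x : elt k) (t : nat) : int :=
  \sum_(i < k.+1 | (t <= i)%N) x i * (p ^ (k - i))%:Z.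

Lemma phi_S p k (x : elt k) t : (t <= k)%N ->
  phi p k x t = x (inord t) * (p ^ (k - t))%:Z + phi p k x t.+1.
Proof.
move=> tk; rewrite /phi (bigD1 (inord t)) /= ?inordK ?leqnn //.
congr (_ + _); apply: eq_bigl => i.
by rewrite -(inj_eq val_inj) /= inordK // ltn_neqAle eq_sym andbC.
Qed.

Lemma phi_out p k (x : elt k) t : (k < t)%N -> phi p k x t = 0.
Proof.
move=> kt; rewrite /phi big_pred0 // => i.
apply/negbTE; rewrite -ltnNge; exact: leq_trans (ltn_ord i) kt.
Qed.

Lemma phi_inj p k (x y : elt k) : (0 < p)%N ->
  (forall t, (t <= k)%N -> phi p k x t = phi p k y t) -> x = y.
Proof.
move=> p0 h; apply/ffunP => i.
have ik : (i <= k)%N by rewrite -ltnS.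
have := h i ik; rewrite (phi_S _ _ _ _ ik) (phi_S _ _ _ _ ik) inord_val.
have -> : phi p k x i.+1 = phi p k y i.+1.
  by case: (leqP i.+1 k) => [/h //|/[dup] /phi_out -> /phi_out ->].
move/addIr; apply: mulIf.
by rewrite eqz_nat -lt0n expn_gt0 p0.
Qed.

Lemma phi_add p k (x y : elt k) t : phi p k (eadd k x y) t = phi p k x t + phi p k y t.
Proof. by rewrite /phi -big_split; apply: eq_bigr => i _; rewrite ffunE mulrDl. Qed.

Lemma phi_scale p k c (x : elt k) t : phi p k (escale k c x) t = c * phi p k x t.
Proof. by rewrite /phi mulr_sumr; apply: eq_bigr => i _; rewrite ffunE mulrA. Qed.

Lemma phi_zero p k t : phi p k (ezero k) t = 0.
Proof. by rewrite /phi big1 // => i _; rewrite ffunE mul0r. Qed.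

Lemma phi_cst p k c t : (t <= k)%N -> phi p k (cst k c) t = c.
Proof.
move=> tk; rewrite /phi (bigD1 ord_max) //= ffunE /= eqxx subnn expn0 mulr1.
rewrite big1 ?addr0 // => i /andP [_ ni]; rewrite ffunE.
by rewrite ifF ?mul0r //; apply: contraNF ni => /eqP ik; apply/eqP/val_inj.
Qed.

Lemma phi_X p k (i : 'I_k.+1) t :
  phi p k (X k i) t = if (t <= i)%N then (p ^ (k - i))%:Z else 0.
Proof.
rewrite /phi; case: leqP => ti.
  rewrite (bigD1 i) //= ffunE eqxx mul1r big1 ?addr0 // => j /andP [_ ji].
  by rewrite ffunE (negbTE ji) mul0r.
rewrite big1 // => j tj; rewrite ffunE; case: eqP => [ej|]; last by rewrite mul0r.
by move: tj; rewrite ej leqNgt ti.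
Qed.

Lemma phi_mul p k (x y : elt k) t :
  phi p k (emul p k x y) t = phi p k x t * phi p k y t.
Proof.
rewrite /phi big_distrlr /=.
transitivity (\sum_(i < k.+1) \sum_(j < k.+1) if (t <= minn i j)%N then
   x i * y j * (p ^ (k - maxn i j))%:Z * (p ^ (k - minn i j))%:Z else 0).
  under eq_bigr => m _ do rewrite ffunE mulr_suml.
  rewrite exchange_big /=; apply: eq_bigr => i _.
  under eq_bigr => m _ do rewrite mulr_suml.
  rewrite exchange_big /=; apply: eq_bigr => j _.
  transitivity (\sum_(m < k.+1 | (t <= m)%N && (m == minn i j :> nat))
     x i * y j * (p ^ (k - maxn i j))%:Z * (p ^ (k - m))%:Z).
    rewrite [RHS]big_mkcondr /=; apply: eq_bigr => m _.
    by rewrite eq_sym; case: eqP => _; rewrite ?mul0r.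
  rewrite (big_ord1_cond_eq _ (fun m : nat => x i * y j * (p ^ (k - maxn i j))%:Z * (p ^ (k - m))%:Z)).
rewrite (leq_ltn_trans (geq_minl i j) (ltn_ord i)) /=.
by [].
rewrite [RHS]big_mkcond; apply: eq_bigr => i _.
case: (leqP t i) => ti /=; last first.
  rewrite big1 // => j _; rewrite ifF //; apply: negbTE; rewrite -ltnNge.
  exact: leq_ltn_trans (geq_minl i j) ti.
rewrite [RHS]big_mkcond; apply: eq_bigr => j _.
have -> : (t <= minn i j)%N = (t <= j)%N by rewrite leq_min ti.
case: (leqP t j) => tj //=.
have e : ((p ^ (k - maxn i j))%:Z * (p ^ (k - minn i j))%:Z = (p ^ (k - i))%:Z * (p ^ (k - j))%:Z).
  by case: (leqP i j) => ij //; rewrite mulrC.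
by rewrite -mulrA e; ring.
Qed.
Lemma fermat_int p (a : int) : prime p -> (p%:Z %| a ^+ p - a)%Z.
Proof.
move=> pp; rewrite (dvdz_pcharf (pchar_Fp pp)) rmorphB rmorphXn /=.
have := @expf_card _ (a%:~R : 'F_p); rewrite card_Fp // => ->.
by rewrite subrr.
Qed.

Lemma dvd_subXX (A B : int) n : (A - B %| A ^+ n - B ^+ n)%Z.
Proof. by rewrite subrXX dvdz_mulr. Qed.

Lemma lift_exp p e (A B : int) : (0 < e)%N ->
  ((p ^ e)%:Z %| A - B)%Z -> ((p ^ e.+1)%:Z %| A ^+ p - B ^+ p)%Z.
Proof.
move=> e0 h.
have hp : (p%:Z %| A - B)%Z.
  apply: dvdz_trans h; rewrite -(prednK e0) expnS PoszM; exact: dvdz_mulr.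
rewrite subrXX expnSr PoszM; apply: dvdz_mul => //.
have -> : \sum_(i < p) A ^+ (p.-1 - i) * B ^+ i =
   \sum_(i < p) (A ^+ (p.-1 - i) - B ^+ (p.-1 - i)) * B ^+ i + \sum_(i < p) B ^+ p.-1.
  rewrite -big_split /=; apply: eq_bigr => i _.
  rewrite mulrBl -exprD subnK ?subrK //; by rewrite -ltnS prednK // (leq_ltn_trans _ (ltn_ord i)).
apply: rpredD.
  by apply: rpred_sum => i _; apply: dvdz_mulr; apply: dvdz_trans hp (dvd_subXX _ _ _).
rewrite sumr_const card_ord -mulr_natr; apply: dvdz_mull. by rewrite natz dvdzz.
Qed.

Lemma phi_resX p k (i : 'I_k.+2) t : (t <= k)%N ->
  phi p k (resX p k.+1 k i) t = if (t <= i)%N then (p ^ (k.+1 - i))%:Z else 0.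
Proof.
move=> tk; rewrite /resX; case: leqP => ik.
  rewrite phi_scale phi_X inordK ?ltnS // subSnn expn1.
  by case: ifP; rewrite ?mulr0 // -PoszM -expnS subSn.
rewrite phi_cst // ifT //; exact: leq_trans tk (ltnW ik).
Qed.

Lemma phi_res p k (x : elt k.+1) t : (t <= k)%N ->
  phi p k (res p k.+1 k x) t = phi p k.+1 x t.
Proof.
move=> tk; rewrite /phi.
under eq_bigr => m _ do rewrite ffunE mulr_suml.
rewrite exchange_big /= [RHS]big_mkcond; apply: eq_bigr => i _.
under eq_bigr => m _ do rewrite -mulrA.
rewrite -mulr_sumr; have := phi_resX p k i t tk; rewrite /phi => ->.
by case: ifP; rewrite ?mulr0.
Qed.

Lemma phi_ind p k (x : elt k) t : phi p k.+1 (ind k.+1 k x) t = p%:Z * phi p k x t.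
Proof.
rewrite /phi big_mkcond big_ord_recr /= ffunE /= ltnn mul0r if_same addr0.
rewrite [in RHS]big_mkcond mulr_sumr; apply: eq_bigr => i _; rewrite ffunE /=.
have ik : (i <= k)%N by rewrite -ltnS.
rewrite ik inord_val; case: ifP; rewrite ?mulr0 // => _.
by rewrite subSn // expnS PoszM mulrCA.
Qed.

Lemma phi_F p l (i : 'I_l.+1) t : (t <= l)%N ->
  phi p l (F p l i) t = (if (t <= i)%N then (p ^ (l - i))%:Z else 0) - (p ^ (l - i))%:Z.
Proof. by move=> tl; rewrite /F phi_add phi_X phi_cst. Qed.

Lemma phi_top p k (x : elt k) : phi p k x k = x ord_max.
Proof.
rewrite phi_S // phi_out // addr0 subnn expn0 mulr1.
by congr (x _); apply/val_inj; rewrite /= inordK.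
Qed.

Lemma phi_jnd_top p k (x : elt k) : phi p k.+1 (jnd p k.+1 k x) k.+1 = x ord_max.
Proof. by rewrite phi_top ffunE /= eqxx. Qed.

Lemma phi_jnd p k (x : elt k) t : prime p -> (t <= k)%N ->
  phi p k.+1 (jnd p k.+1 k x) t = (phi p k x t) ^+ p.
Proof.
move=> pp tk; rewrite -(subKn tk); move: (leq_subr t k).
elim: (k - t)%N => [|d IH] hd.
  rewrite subn0 phi_S // phi_jnd_top ffunE inordK // ifF; last first.
    by apply: negbTE; rewrite neq_ltn ltnSn.
  rewrite leqnn subSnn subnn expn1 expn0 expr1 phi_top divzK ?subrK //.
  exact: fermat_int.
have hk : (k - d.+1 < k)%N by rewrite ltn_subrL (leq_ltn_trans (leq0n d) hd).
rewrite phi_S ?(leq_trans (ltnW hk)) // ffunE inordK ?ltnS ?(leq_trans (ltnW hk)) //.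
rewrite ifF; last by apply: negbTE; rewrite neq_ltn ltnS (leq_trans (ltnW hk)).
rewrite ifF; last by rewrite leqNgt hk.
set t' := (k - d.+1)%N.
rewrite -/(phi p k x t') -/(phi p k x t'.+1).
rewrite /t' subnSK // IH ?(ltnW hd) // subSnn expn1 divzK ?subrK //.
rewrite subSn ?(leq_trans (ltnW hk)) //; apply: lift_exp.
  by rewrite subn_gt0.
rewrite (@phi_S p k x (k - d.+1)) ?(ltnW hk) // subnSK // addrK.
exact: dvdz_mull (dvdzz _).
Qed.

Definition M p q l k (y : elt l) : Prop :=
  forall t, (t <= k)%N -> (q%:Z %| phi p l y t)%Z.

Lemma emul_cstl p k c (x : elt k) : (0 < p)%N ->
  emul p k (cst k c) x = escale k c x.
Proof.
move=> p0; apply: (phi_inj p) => // t tk.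
by rewrite phi_mul phi_cst // phi_scale.
Qed.

Lemma emulC p k (x y : elt k) : (0 < p)%N -> emul p k x y = emul p k y x.
Proof. by move=> p0; apply: (phi_inj p) => // t tk; rewrite !phi_mul mulrC. Qed.

Lemma M_ideal p q l k : is_ideal p l (M p q l k).
Proof.
split.
- by move=> t _; rewrite phi_zero dvdz0.
- by move=> x y hx hy t tk; rewrite phi_add rpredD ?hx ?hy.
- by move=> r x hx t tk; rewrite phi_mul dvdz_mull ?hx.
Qed.

Lemma coprime_qp p q e : prime p -> prime q -> q <> p -> coprimez q%:Z (p ^ e)%:Z.
Proof.
move=> pp pq qp; rewrite coprimezE /= coprimeXr // prime_coprime //.
by rewrite dvdn_prime2 //; apply/eqP.
Qed.

Lemma tri p q l (y : elt l) (m : 'I_l.+1) : prime p -> prime q -> q <> p ->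
  (q%:Z %| phi p l y m)%Z -> (q%:Z %| phi p l y m.+1)%Z -> (q%:Z %| y m)%Z.
Proof.
move=> pp pq qp h1 h2.
have ml : (m <= l)%N by rewrite -ltnS.
move: h1; rewrite phi_S // inord_val => h1.
have : (q%:Z %| y m * (p ^ (l - m))%:Z)%Z.
  by rewrite -(addrK (phi p l y m.+1) (y m * _)) rpredB.
by rewrite Gauss_dvdzl // coprime_qp.
Qed.

Lemma principal_M p q l (y : elt l) : prime p -> prime q -> q <> p ->
  principal p l (cst l q%:Z) y <-> M p q l l y.
Proof.
move=> pp pq qp; have p0 := prime_gt0 pp; split.
  by move=> [z ->] t tl; rewrite phi_mul phi_cst // dvdz_mulr.
move=> h; exists [ffun m => (y m %/ q%:Z)%Z].
rewrite emul_cstl //; apply/ffunP => m; rewrite !ffunE mulrC divzK //.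
have ml : (m <= l)%N by rewrite -ltnS.
apply: (tri p q l y m pp pq qp (h m ml)).
case: (leqP m.+1 l) => [/h //|/phi_out ->]; exact: dvdz0.
Qed.

Lemma M_full p q k (x : elt k) : M p q k k x -> forall t, (q%:Z %| phi p k x t)%Z.
Proof. by move=> h t; case: (leqP t k) => [/h //|/phi_out ->]; exact: dvdz0. Qed.

Lemma gen_ideal p k A : is_ideal p k (gen p k A).
Proof.
split.
- by move=> I [h0 _ _] _.
- by move=> x y hx hy I hI hA; case: (hI) => _ hadd _; apply: hadd; [apply: hx | apply: hy].
- by move=> r x hx I hI hA; case: (hI) => _ _ hmul; apply: hmul; apply: hx.
Qed.

Lemma gen_eq p k (A B : elt k -> Prop) : is_ideal p k B ->
  (forall a, A a -> B a) ->
  (forall I, is_ideal p k I -> (forall a, A a -> I a) -> forall b, B b -> I b) ->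
  ideal_eq k (gen p k A) B.
Proof.
move=> hB hAB hBI x; split; first by move=> hx; apply: hx.
move=> hx I hI hA; exact: hBI hI hA x hx.
Qed.

Lemma ideal_scale p k (I : elt k -> Prop) c x : (0 < p)%N ->
  is_ideal p k I -> I x -> I (escale k c x).
Proof. by move=> p0 [_ _ hm] hx; rewrite -(emul_cstl p) //; apply: hm. Qed.

Lemma phi_zeros p l (y : elt l) j : (j <= l)%N ->
  (forall m : 'I_l.+1, (j <= m < l)%N -> y m = 0) -> phi p l y j = y ord_max.
Proof.
move=> jl h; rewrite /phi (bigD1 ord_max) //= subnn expn0 mulr1 big1 ?addr0 //.
move=> i /andP [ji ni]; rewrite h ?mul0r // ji /= ltn_neqAle -ltnS ltn_ord andbT.
by apply: contraNneq ni => e; apply/eqP/val_inj.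
Qed.

Lemma F_in_M p q l k (i : 'I_l.+1) : (k <= i)%N -> M p q l k (F p l i).
Proof.
move=> ki t tk; have ti := leq_trans tk ki.
have tl : (t <= l)%N by rewrite (leq_trans ti) // -ltnS.
by rewrite phi_F // ti subrr dvdz0.
Qed.

Lemma decomp p q l k (I : elt l -> Prop) : prime p -> prime q -> q <> p ->
  (k <= l)%N -> is_ideal p l I -> I (cst l q%:Z) ->
  (forall i : 'I_l.+1, (k <= i < l)%N -> I (F p l i)) ->
  forall y, M p q l k y -> I y.
Proof.
move=> pp pq qp kl hI hq hF.
have p0 := prime_gt0 pp.
case: (hI) => _ hadd hmul.
suff H : forall d y, M p q l k y ->
    (forall m : 'I_l.+1, (k + d <= m < l)%N -> y m = 0) -> I y.
  move=> y hy; apply: (H (l - k)%N y hy) => m; rewrite subnKC // => /andP [a b].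
  by rewrite ltnNge a in b.
elim=> [|d IH] y hy hz.
  have hq' : forall m, (q%:Z %| y m)%Z.
    move=> m; case: (ltnP m k) => mk.
      by apply: (tri p q l y m pp pq qp); apply: hy => //; exact: ltnW.
    case: (ltnP m l) => ml.
      by rewrite hz ?addn0 ?mk ?ml // dvdz0.
    have -> : m = ord_max.
      by apply/val_inj/eqP; rewrite /= eqn_leq ml -ltnS ltn_ord.
    rewrite -(phi_zeros p l y k) //; first exact: hy.
    by move=> m' /andP [a b]; apply: hz; rewrite addn0 a b.
  have -> : y = emul p l [ffun m => (y m %/ q%:Z)%Z] (cst l q%:Z).
    by rewrite emulC // emul_cstl //; apply/ffunP => m; rewrite !ffunE mulrC divzK.
  exact: hmul.
case: (ltnP (k + d) l) => kdl; last first.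
  apply: IH => // m /andP [a b].
  by move: (leq_trans kdl a); rewrite leqNgt b.
set j : 'I_l.+1 := inord (k + d).
have jv : (j : nat) = (k + d)%N by rewrite inordK // ltnS ltnW.
set c := y j.
set y2 := eadd l y (escale l (- c) (F p l j)).
have hy2 : I y2.
  apply: IH.
    case: (M_ideal p q l k) => _ madd mmul; apply: madd => //.
    rewrite -(emul_cstl p) //; apply: mmul; apply: F_in_M; by rewrite jv leq_addr.
  move=> m /andP [a b]; rewrite /y2 !ffunE.
  case: (eqVneq m j) => [->|mj].
    rewrite ifF ?jv; last by apply/negbTE; rewrite neq_ltn kdl.
    by rewrite /c addr0 mulr1 subrr.
  rewrite ifF; last by apply/negbTE; rewrite neq_ltn b.
  rewrite hz ?mulr0 ?addr0 ?b ?andbT //.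
  rewrite addnS ltn_neqAle a andbT -jv eq_sym; apply: contraNneq mj => e; by apply/eqP/val_inj.
have -> : y = eadd l y2 (escale l c (F p l j)).
  by apply/ffunP => m; rewrite /y2 !ffunE; ring.
apply: hadd => //; apply: (ideal_scale p) => //; apply: hF; by rewrite jv leq_addr kdl.
Qed.

Lemma pz (p e : nat) : (p ^ e)%:Z = (p%:Z) ^+ e.
Proof. by rewrite -!natz natrX. Qed.

Lemma cstq_in p q l (I : elt l.+1 -> Prop) : prime p -> prime q -> q <> p ->
  is_ideal p l.+1 I -> I (ind l.+1 l (cst l q%:Z)) -> I (jnd p l.+1 l (cst l q%:Z)) ->
  I (cst l.+1 q%:Z).
Proof.
move=> pp pq qp hI hi hj; have p0 := prime_gt0 pp.
have hdiv : (p%:Z %| q%:Z ^+ p.-1 - 1)%Z.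
  have := fermat_int p q%:Z pp.
  rewrite -{1}(prednK p0) exprS -[X in _ - X](mulr1 (q%:Z)) -mulrBr Gauss_dvdzr //.
  rewrite coprimezE /= prime_coprime // dvdn_prime2 //; apply/eqP => e; exact: qp.
have e := divzK hdiv.
set c := - ((q%:Z ^+ p.-1 - 1) %/ p%:Z)%Z.
have -> : cst l.+1 q%:Z = eadd l.+1 (jnd p l.+1 l (cst l q%:Z)) (escale l.+1 c (ind l.+1 l (cst l q%:Z))).
  apply: (phi_inj p) => // t ht; rewrite phi_add phi_scale phi_ind phi_cst //.
  case: (ltnP t l.+1) => tl.
    rewrite phi_jnd // phi_cst // /c mulrA mulNr e.
    rewrite -[in q%:Z ^+ p](prednK p0) exprS; ring.
  have -> : t = l.+1 by apply/eqP; rewrite eqn_leq ht tl.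
  rewrite phi_jnd_top phi_out // ffunE /= eqxx; ring.
case: (hI) => _ hadd _; apply: hadd => //; exact: (ideal_scale p).
Qed.

Lemma F_top p l (i : 'I_l.+2) (j : 'I_l.+1) : prime p -> (0 < l)%N ->
  (i : nat) = l -> (j : nat) = l.-1 ->
  F p l.+1 i = eadd l.+1 (jnd p l.+1 l (F p l j))
     (escale l.+1 ((-1) ^+ p * (p ^ p.-2)%:Z) (ind l.+1 l (F p l j))).
Proof.
move=> pp hl iv jv; have p0 := prime_gt0 pp; have p1 := prime_gt1 pp.
have e1 : (l - l.-1)%N = 1%N by rewrite -{1}(prednK hl) subSnn.
apply: (phi_inj p) => // t ht; rewrite phi_add phi_scale phi_ind.
case: (ltnP t l.+1) => tl.
  rewrite ltnS in tl; rewrite phi_jnd // !phi_F // iv jv subSnn e1 tl expn1.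
  case: ifP => _; first by rewrite subrr expr0n eqn0Ngt p0 mulr0 mulr0 addr0.
  rewrite subrr pz; have -> : p = p.-2.+2 by rewrite -subn2 subnSK // subn1 prednK.
  rewrite /= sub0r !exprS (exprNn (Posz p.-2.+2)); ring.
have -> : t = l.+1 by apply/eqP; rewrite eqn_leq ht tl.
rewrite phi_jnd_top (phi_out p l) // phi_F // iv ltnn subSnn expn1.
rewrite !ffunE /= eqxx jv e1 expn1.
have -> : (ord_max == j) = false.
  by apply/negbTE; rewrite -(inj_eq val_inj) /= jv neq_ltn ltn_predL hl orbT.

by rewrite !mulr0 addr0.
Qed.

Lemma F_low p l (i : 'I_l.+2) (iL : 'I_l.+2) : prime p -> (i < l)%N -> (iL : nat) = l ->
  F p l.+1 i = eadd l.+1 (ind l.+1 l (F p l (inord i)))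
     (escale l.+1 (p ^ (l - i))%:Z (F p l.+1 iL)).
Proof.
move=> pp hi iLv; have p0 := prime_gt0 pp.
have hi' : (i < l.+1)%N by apply: ltnW.
apply: (phi_inj p) => // t ht; rewrite phi_add phi_ind phi_scale (phi_F p l.+1 i) // (phi_F p l.+1 iL) // iLv.
rewrite subSn ?(ltnW hi) // subSnn expn1 expnS PoszM.
case: (ltnP t l.+1) => tl.
  rewrite ltnS in tl; rewrite phi_F // inordK // tl; case: ifP => _; ring.
have -> : t = l.+1 by apply/eqP; rewrite eqn_leq ht tl.
rewrite phi_out // ltnn ifF; last by apply/negbTE; rewrite -ltnNge ltnS ltnW.
ring.
Qed.

Lemma Siter_M p q k : prime p -> prime q -> q <> p ->
  ideal_eq k (Siter p q%:Z k) (M p q k k).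
Proof.
move=> pp pq qp; have p0 := prime_gt0 pp.
elim: k => [|k IH] /=.
  move=> y; exact: principal_M.
apply: gen_eq.
- exact: M_ideal.
- move=> a [x [hx [->|->]]]; have hx' := M_full p q k x (proj1 (IH x) hx).
    by move=> t _; rewrite phi_ind; apply: dvdz_mull.
  move=> t tk; case: (ltnP t k.+1) => tl.
    rewrite ltnS in tl; rewrite phi_jnd //; exact: dvdz_exp.
  have -> : t = k.+1 by apply/eqP; rewrite eqn_leq tk tl.
  by rewrite phi_jnd_top -(phi_top p).
- move=> I hI hA b hb.
  apply: (decomp p q k.+1 k.+1 I pp pq qp (leqnn _) hI) => //.
    have hc : Siter p q%:Z k (cst k q%:Z).
      by apply/IH => t tk; rewrite phi_cst // dvdzz.
    by apply: (cstq_in p q k I pp pq qp hI); apply: hA; exists (cst k q%:Z); split => //; [left | right].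
  by move=> i /andP [a b']; rewrite ltnNge a in b'.
Qed.

Lemma Liter_M p q k n : prime p -> prime q -> q <> p ->
  ideal_eq (n + k) (Liter p k n (Siter p q%:Z k)) (M p q (n + k) k).
Proof.
move=> pp pq qp; elim: n => [|n IH] /=.
  exact: Siter_M.
move=> y; rewrite /Lop; split => h.
  move=> t tk; rewrite -phi_res ?(leq_trans tk (leq_addl _ _)) //.
  exact: (proj1 (IH _) h t tk).
apply/(proj2 (IH _)) => t tk; rewrite phi_res ?(leq_trans tk (leq_addl _ _)) //; exact: h.
Qed.

Lemma J_M p q l k : prime p -> prime q -> q <> p -> (k < l)%N ->
  ideal_eq l (J p l k q%:Z) (M p q l k).
Proof.
move=> pp pq qp kl; rewrite /J kl; apply: gen_eq.
- exact: M_ideal.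
- move=> a [->|[i [/andP [ki _] ->]]]; last exact: F_in_M.
  by move=> t tk; rewrite phi_cst ?dvdzz // (leq_trans tk (ltnW kl)).
- move=> I hI hA b hb; apply: (decomp p q l k I pp pq qp (ltnW kl) hI) => //.
    by apply: hA; left.
  by move=> i hi; apply: hA; right; exists i.
Qed.

Lemma part3 p q k n : prime p -> prime q -> q <> p -> (1 <= n)%N ->
  ideal_eq (n + k).+1 (Sop p (n + k) (Liter p k n (Siter p q%:Z k)))
     (Liter p k n.+1 (Siter p q%:Z k)).
Proof.
move=> pp pq qp hn y; have p0 := prime_gt0 pp.
have HL := Liter_M p q k n pp pq qp.
rewrite (Liter_M p q k n.+1 pp pq qp y).
set L := (n + k)%N.
have kL : (k < L)%N by rewrite /L -(prednK hn) addSn ltnS leq_addl.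
have hL : (0 < L)%N by apply: leq_ltn_trans kL.
move: y; apply: gen_eq.
- exact: M_ideal.
- move=> a [x [hx [->|->]]]; have hx' := proj1 (HL x) hx.
    by move=> t tk; rewrite phi_ind; apply: dvdz_mull; apply: hx'.
  move=> t tk; rewrite phi_jnd ?(leq_trans tk (ltnW kL)) //.
  by apply: dvdz_exp => //; apply: hx'.
- move=> I hI hA b hb; case: (hI) => _ hadd _.
  have inA : forall x, M p q L k x -> I (ind L.+1 L x) /\ I (jnd p L.+1 L x).
    move=> x hx; split; apply: hA; exists x; (split; [exact: (proj2 (HL x) hx) | by [left | right]]).
  refine (decomp p q L.+1 k I pp pq qp (leq_trans (ltnW kL) (leqnSn L)) hI _ _ b hb).
    have hc : M p q L k (cst L q%:Z).
      by move=> t tk; rewrite phi_cst ?dvdzz // (leq_trans tk (ltnW kL)).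
    by apply: (cstq_in p q L I pp pq qp hI); [exact: (proj1 (inA _ hc)) | exact: (proj2 (inA _ hc))].
  set jL : 'I_L.+1 := inord L.-1.
  have jv : (jL : nat) = L.-1 by rewrite inordK // prednK // ltnW.
  have hF : M p q L k (F p L jL).
    by apply: F_in_M; rewrite jv -ltnS prednK.
  have top : forall i : 'I_L.+2, (i : nat) = L -> I (F p L.+1 i).
    move=> i iv; rewrite (F_top p L i jL pp hL iv jv).
    apply: hadd; first exact: (proj2 (inA _ hF)).
    by apply: (ideal_scale p) => //; exact: (proj1 (inA _ hF)).
  move=> i /andP [ki iL]; rewrite ltnS leq_eqVlt in iL.
  case/orP: iL => [/eqP|hi]; first exact: top.
  have iLv : ((inord L : 'I_L.+2) : nat) = L by rewrite inordK.
  rewrite (F_low p L i (inord L) pp hi iLv).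
  apply: hadd.
    apply: (proj1 (inA _ _)); apply: F_in_M; rewrite inordK //; exact: ltnW.
  by apply: (ideal_scale p) => //; apply: top.
Qed.

Theorem proposition6 (p q r : nat) (hp : prime p) (hq : prime q) (hqp : q <> p) :
  (forall k : nat, (k <= r)%N ->
     ideal_eq k (Siter p q%:Z k) (principal p k (cst k q%:Z))) /\
  (forall k n : nat, (1 <= n + k <= r)%N ->
     ideal_eq (n + k) (Liter p k n (Siter p q%:Z k)) (J p (n + k) k q%:Z)) /\
  (forall k n : nat, (1 <= n)%N -> (n.+1 + k <= r)%N ->
     ideal_eq (n + k).+1 (Sop p (n + k) (Liter p k n (Siter p q%:Z k))) (Liter p k n.+1 (Siter p q%:Z k))).
Proof.
have P1 : forall k, ideal_eq k (Siter p q%:Z k) (principal p k (cst k q%:Z)).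
  move=> k y; rewrite (Siter_M p q k hp hq hqp y); split => h.
    by apply/principal_M.
  by apply/(principal_M p q k y hp hq hqp).
split; first by move=> k _; exact: P1.
split; last by move=> k n hn _; exact: part3.
move=> k [|n] _.
  by rewrite /J ltnn; exact: P1.
move=> y; rewrite (Liter_M p q k n.+1 hp hq hqp y).
rewrite (J_M p q (n.+1 + k) k hp hq hqp) //.
by rewrite addSn ltnS leq_addl.
Qed.
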